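(* Every regular embedding $|\psi\rangle$ of the randomized one-out-of-two oblivious transfer $P^{\mathrm{OT}}_{X,Y}$ has leakage $\Delta_\psi(P^{\mathrm{OT}}_{X,Y})\ge\tfrac12$. Among regular embeddings, the leakage is minimized by the canonical embedding.
   Context: $P^{\mathrm{OT}}_{X,Y}$ is the distribution with Alice's output $X=(x_0,x_1)\in\{0,1\}^2$ and Bob's output $Y=(c,y)\in\{0,1\}^2$, $P((x_0,x_1),(c,y))=\tfrac18$ if $y=x_c$ and $0$ otherwise. A regular embedding of a distribution $P_{X,Y}$ is a state $\sum_{x,y}e^{i\theta(x,y)}\sqrt{P_{X,Y}(x,y)}|x\rangle_A|y\rangle_B$ for a real function $\theta$ (computational bases indexed by outcomes); the canonical embedding has $\theta\equiv0$. Its leakage is $\Delta_\psi(P_{X,Y})=\max\{S(X;B)-I(X;Y),\,S(A;Y)-I(X;Y)\}$, where $X$ (resp. $Y$) is the outcome of measuring $A$ (resp. $B$) in the computational basis, $S(X;B)$ is the quantum mutual information $S(X)+S(B)-S(XB)$ (von Neumann entropy) of the state after measuring $A$, and similarly for $S(A;Y)$; $I$ is Shannon mutual information. *)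

(* Defs.v *)
From Stdlib Require Import Reals.
From HB Require Import structures.
From mathcomp Require Import all_boot all_order all_algebra.
From mathcomp Require Import spectral.
From mathcomp.real_closed Require Import complex.
From mathcomp Require Import Rstruct.

Set Implicit Arguments.
Unset Strict Implicit.
Unset Printing Implicit Defensive.

Import Order.TTheory GRing.Theory Num.Theory.
Local Open Scope ring_scope.

Notation C := (R[i]).

(* logarithm in base 2 (bits); with Stdlib's convention ln x = 0 for x <= 0,
   so eta 0 = 0 as usual *)
Definition log2 (x : R) : R := (ln x / ln 2)%R.
Definition eta (x : R) : R := x * log2 x.

Definition shannon (T : finType) (p : T -> R) : R := - \sum_(t : T) eta (p t).

Definition marg1 (X Y : finType) (P : X -> Y -> R) (x : X) : R := \sum_(y : Y) P x y.
Definition marg2 (X Y : finType) (P : X -> Y -> R) (y : Y) : R := \sum_(x : X) P x y.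

Definition mutual_info (X Y : finType) (P : X -> Y -> R) : R :=
  shannon (marg1 P) + shannon (marg2 P) - shannon (fun xy : (X * Y)%type => P xy.1 xy.2).

(* an operator on C^T, given by its matrix entries in the computational basis *)
Definition op (T : finType) := T -> T -> C.

Definition opmx (T : finType) (rho : op T) : 'M[C]_#|T| :=
  \matrix_(i, j) rho (enum_val i) (enum_val j).

(* von Neumann entropy: -sum_i lambda_i log2 lambda_i over the eigenvalues of rho
   (spectral decomposition of the (Hermitian, hence normal) matrix of rho) *)
Definition vN_entropy (T : finType) (rho : op T) : R :=
  - \sum_(i < #|T|) eta (complex.Re (spectral_diag (opmx rho) 0 i)).

Definition proj (T : finType) (psi : T -> C) : op T :=
  fun a b => psi a * (psi b)^*.

Definition ptraceB (X Y : finType) (rho : op (X * Y)%type) : op X :=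
  fun x x' => \sum_(y : Y) rho (x, y) (x', y).
Definition ptraceA (X Y : finType) (rho : op (X * Y)%type) : op Y :=
  fun y y' => \sum_(x : X) rho (x, y) (x, y').

(* non-selective measurement of A (resp. B) in the computational basis *)
Definition measureA (X Y : finType) (rho : op (X * Y)%type) : op (X * Y)%type :=
  fun a b => if a.1 == b.1 then rho a b else 0.
Definition measureB (X Y : finType) (rho : op (X * Y)%type) : op (X * Y)%type :=
  fun a b => if a.2 == b.2 then rho a b else 0.

Definition qmutual_info (X Y : finType) (rho : op (X * Y)%type) : R :=
  vN_entropy (ptraceB rho) + vN_entropy (ptraceA rho) - vN_entropy rho.

Definition regular_embedding (X Y : finType) (P : X -> Y -> R) (theta : X -> Y -> R)
  : (X * Y)%type -> C :=
  fun xy => (cos (theta xy.1 xy.2) +i* sin (theta xy.1 xy.2))%C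
            * (sqrt (P xy.1 xy.2))%:C%C.

Definition leakage (X Y : finType) (P : X -> Y -> R) (psi : (X * Y)%type -> C) : R :=
  Num.max (qmutual_info (measureA (proj psi)) - mutual_info P)
          (qmutual_info (measureB (proj psi)) - mutual_info P).

(* Alice: (x0, x1); Bob: (c, y); P = 1/8 if y = x_c, else 0 *)
Definition P_OT (x : bool * bool) (cy : bool * bool) : R :=
  if cy.2 == (if cy.1 then x.2 else x.1) then 1 / 8 else 0.

(* Main.v *)
Require Import Defs.
From Stdlib Require Import Reals Lra Psatz.
From HB Require Import structures.
From mathcomp Require Import all_boot all_order all_algebra spectral.
From mathcomp.real_closed Require Import complex.
From mathcomp Require Import Rstruct.
Set Implicit Arguments.
Unset Strict Implicit.
Unset Printing Implicit Defensive.
Import Order.TTheory GRing.Theory Num.Theory.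
Local Open Scope ring_scope.
Local Open Scope sesquilinear_scope.
Local Notation CC := (R[i]).
Local Notation "x ^*" := (Num.conj x) : ring_scope.

Section Gen.
Variable n : nat.
Variable M : 'M[CC]_n.
Hypothesis hM : M ^t* = M.

Let P := spectralmx M.
Let d := spectral_diag M.

Lemma normM : M \is normalmx.
Proof. by apply/normalmxP; rewrite hM. Qed.

Lemma PPt : P *m P ^t* = 1%:M.
Proof. exact/unitarymxP/spectral_unitarymx. Qed.

Lemma PtP : P ^t* *m P = 1%:M.
Proof. by rewrite -invmx_unitary ?spectral_unitarymx // mulVmx // spectral_unit. Qed.

Definition phi (X : 'M[CC]_n) := P *m X *m P ^t*.

Lemma phiM X Y : phi (X *m Y) = phi X *m phi Y.
Proof.
rewrite /phi !mulmxA -[P *m X *m P ^t* *m P]mulmxA PtP mulmx1; done.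
Qed.

Lemma phi_tr X : \tr (phi X) = \tr X.
Proof. by rewrite /phi mxtrace_mulC mulmxA PtP mul1mx. Qed.

Lemma phiM0 : phi M = diag_mx d.
Proof.
have E := orthomx_spectralP normM.
rewrite /phi {1}E invmx_unitary ?spectral_unitarymx // -/P -/d.
by rewrite !mulmxA PPt mul1mx -mulmxA PPt mulmx1.
Qed.

Lemma phi_lin (a b : CC) : phi (a *: M - b%:M) = diag_mx (\row_i (a * d 0 i - b)).
Proof.
rewrite /phi mulmxBr mulmxBl -scalemxAr -scalemxAl.
rewrite -/(phi M) phiM0 mul_mx_scalar -scalemxAl PPt.
apply/matrixP => i j; rewrite !mxE; case: eqP => [->|_]; rewrite ?mulr1n ?mulr0n //.
by rewrite mulr1.
by rewrite !mulr0 subr0.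
Qed.


Variables (a b : CC).
Definition ev (i : 'I_n) := a * d 0 i - b.
Let N := a *: M - b%:M.

Lemma phiN : phi N = diag_mx (\row_i ev i).
Proof. exact: phi_lin. Qed.

Lemma sum1 : \sum_i ev i = \tr N.
Proof. by rewrite -phi_tr phiN mxtrace_diag; apply: eq_bigr => i _; rewrite mxE. Qed.

Lemma sum2 : \sum_i ev i ^+ 2 = \tr (N *m N).
Proof.
rewrite -phi_tr phiM phiN mulmx_diag mxtrace_diag.
by apply: eq_bigr => i _; rewrite !mxE expr2.
Qed.

Lemma sum3 : \sum_i ev i ^+ 3 = \tr (N *m N *m N).
Proof.
rewrite -phi_tr !phiM phiN !mulmx_diag mxtrace_diag.
by apply: eq_bigr => i _; rewrite !mxE !exprS expr0 mulr1 mulrA.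
Qed.

Lemma pt2 k : N *m N = k *: N -> forall i, ev i ^+ 2 = k * ev i.
Proof.
move=> E i; have := congr1 (fun X => phi X i i) E.
rewrite phiM /phi -scalemxAr -scalemxAl -/(phi N) phiN mulmx_diag !mxE eqxx !mulr1n.
by rewrite expr2.
Qed.

Lemma pt3 k : N *m N *m N = k *: N -> forall i, ev i ^+ 3 = k * ev i.
Proof.
move=> E i; have := congr1 (fun X => phi X i i) E.
rewrite !phiM /phi -scalemxAr -scalemxAl -/(phi N) phiN !mulmx_diag !mxE eqxx !mulr1n.
by rewrite !exprS expr0 mulr1 mulrA.
Qed.

Lemma pos m (A : 'M[CC]_(n, m)) : N = A *m A ^t* -> forall i, 0 <= ev i.
Proof.
move=> E i; have := congr1 (fun X => phi X i i) E.
rewrite phiN mxE eqxx mulr1n mxE => ->.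
have -> : phi (A *m A ^t*) = (P *m A) *m (P *m A) ^t*.
  by rewrite /phi trmx_mul map_mxM !mulmxA.
rewrite mxE; apply: sumr_ge0 => j _; rewrite !mxE.
exact: mul_conjC_ge0.
Qed.

End Gen.

Section Op.
Variable T : finType.

Definition opmul (r s : op T) : op T := fun a b => \sum_t r a t * s t b.
Definition oplin (a b : CC) (r : op T) : op T :=
  fun x y => a * r x y - b * (x == y)%:R.

Lemma sum_enum (Z : finType) (F : Z -> CC) : \sum_(k < #|Z|) F (enum_val k) = \sum_t F t.
Proof. by rewrite -(big_enum_val (A := Z)) /=; apply: eq_bigl => x; rewrite inE. Qed.

Lemma opmx_mul (r s : op T) : (@opmx T r) *m (@opmx T s) = (@opmx T (opmul r s)).
Proof.
apply/matrixP => i j; rewrite !mxE /opmul.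
rewrite -(sum_enum (fun t => r (enum_val i) t * s t (enum_val j))).
by apply: eq_bigr => k _; rewrite !mxE.
Qed.

Lemma opmx_tr (r : op T) : \tr ((@opmx T r)) = \sum_t r t t.
Proof.
rewrite /mxtrace -(sum_enum (fun t => r t t)).
by apply: eq_bigr => k _; rewrite !mxE.
Qed.

Lemma opmx_lin a b (r : op T) : a *: (@opmx T r) - b%:M = (@opmx T (oplin a b r)).
Proof.
apply/matrixP => i j; rewrite !mxE /oplin (inj_eq enum_val_inj).
by case: eqP => _; rewrite ?mulr1n ?mulr0n ?mulr1 ?mulr0.
Qed.

Lemma opmx_scale (k : CC) (r : op T) : k *: (@opmx T r) = (@opmx T (fun x y => k * r x y)).
Proof. by apply/matrixP => i j; rewrite !mxE. Qed.

Lemma opmx_ext (r s : op T) : (forall x y, r x y = s x y) -> (@opmx T r) = (@opmx T s).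
Proof. by move=> E; apply/matrixP => i j; rewrite !mxE E. Qed.

Lemma opmx_herm (r : op T) : (forall x y, r y x = (r x y)^*) -> (@opmx T r) ^t* = (@opmx T r).
Proof. by move=> E; apply/matrixP => i j; rewrite !mxE E conjCK. Qed.

Lemma opmx_adj (Z : finType) (f : T -> Z -> CC) (r : op T) :
  (forall x y, r x y = \sum_z f x z * (f y z)^*) ->
  (@opmx T r) = (\matrix_(i < #|T|, j < #|Z|) f (enum_val i) (enum_val j)) *m
           (\matrix_(i < #|T|, j < #|Z|) f (enum_val i) (enum_val j)) ^t*.
Proof.
move=> E; apply/matrixP => i j; rewrite !mxE E.
rewrite -(sum_enum (fun z => f (enum_val i) z * (f (enum_val j) z)^*)).
by apply: eq_bigr => k _; rewrite !mxE.
Qed.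

End Op.
Section Ana.
Local Open Scope R_scope.
Let L := ln 2.
Let c := 1 - ln 2.

Lemma L_bounds : / 2 < L < 1.
Proof.
split; [exact ln_lt_2|].
rewrite /L -(ln_exp 1); apply ln_increasing; [lra|].
have := exp_ineq1 1; lra.
Qed.

Definition Ff (u : R) := u - c * u ^ 2 - ln (1 + u).
Definition Fd (u : R) := 1 - 2 * c * u - / (1 + u).

Lemma dpl_eq f x l l' : l = l' -> derivable_pt_lim f x l -> derivable_pt_lim f x l'.
Proof. by move=> ->. Qed.

Lemma Ff_der t : -1 < t -> derivable_pt_lim Ff t (Fd t).
Proof.
move=> ht.
have h1 := derivable_pt_lim_id t.
have h2 := derivable_pt_lim_scal (fun y => y ^ 2) c t _ (derivable_pt_lim_pow t 2).
have h0 : derivable_pt_lim (fun u => 1 + u) t 1.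
  apply (@dpl_eq _ _ (0 + 1)); [lra|].
  exact (derivable_pt_lim_plus (fun _ => 1) id t 0 1 (derivable_pt_lim_const 1 t) (derivable_pt_lim_id t)).
have h3 := derivable_pt_lim_comp _ _ _ _ _ h0 (derivable_pt_lim_ln (1 + t) ltac:(lra)).
have h := derivable_pt_lim_minus _ _ _ _ _ (derivable_pt_lim_minus _ _ _ _ _ h1 h2) h3.
apply: (@dpl_eq _ _ _ _ _ h); rewrite /Fd /=; field; lra.
Qed.

Lemma Ff0 : Ff 0 = 0.
Proof. rewrite /Ff Rplus_0_r ln_1; ring. Qed.

Lemma Ff1 : Ff 1 = 0.
Proof. rewrite /Ff /c /L (_ : 1 + 1 = 2); [ring|lra]. Qed.

Lemma Fd_sign t : -1 < t -> Fd t * (1 + t) = t * (1 - 2 * c * (1 + t)).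
Proof. move=> h; rewrite /Fd; field; lra. Qed.

Lemma MVT_Ff a b : -1 < a -> a < b -> exists x, Ff b - Ff a = Fd x * (b - a) /\ a < x < b.
Proof.
move=> ha hab; apply: MVT_cor2 => // x hx; apply: Ff_der; lra.
Qed.

Lemma Ff_nonneg u : -1 < u <= 1 -> 0 <= Ff u.
Proof.
move=> [hu1 hu2].
have [hL1 hL2] := L_bounds.
have hc0 : 0 < c by rewrite /c -/L; lra.
have hc1 : 2 * c < 1 by rewrite /c -/L; lra.
destruct (Rtotal_order u 0) as [hneg|[hz|hpos]].
- have [x [hx1 hx2]] := @MVT_Ff u 0 hu1 hneg.
  have hs := @Fd_sign x ltac:(lra).
  have : Fd x < 0.
    have h1 : 0 < 1 - 2 * c * (1 + x) by nra.
    have h2 : x * (1 - 2 * c * (1 + x)) < 0 by nra.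
    nra.
  move: hx1; rewrite Ff0; nra.
- rewrite hz Ff0; lra.
- destruct (Rle_lt_dec (2 * c * (1 + u)) 1) as [hsm|hbig].
  + have [x [hx1 hx2]] := @MVT_Ff 0 u ltac:(lra) hpos.
    have hs := @Fd_sign x ltac:(lra).
    have : 0 <= Fd x.
      have h1 : 0 <= 1 - 2 * c * (1 + x) by nra.
      have h2 : 0 <= x * (1 - 2 * c * (1 + x)) by nra.
      nra.
    move: hx1; rewrite Ff0; nra.
  + destruct (Rle_lt_or_eq_dec u 1 hu2) as [hlt|heq]; last by rewrite heq Ff1; lra.
    have [x [hx1 hx2]] := @MVT_Ff u 1 ltac:(lra) hlt.
    have hs := @Fd_sign x ltac:(lra).
    have : Fd x < 0.
      have h1 : 1 - 2 * c * (1 + x) < 0 by nra.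
      have h2 : x * (1 - 2 * c * (1 + x)) < 0 by nra.
      nra.
    move: hx1; rewrite Ff1; nra.
Qed.


Lemma ln4 : ln 4 = 2 * ln 2.
Proof. replace 4 with (2 * 2) by lra. rewrite ln_mult; lra. Qed.

Definition qpoly (r : R) :=
  let u := 4 * r - 1 in
  (2 * ln 2 + (2 * ln 2 - 1) * u - ln 2 * u ^ 2 + (1 - ln 2) * u ^ 3) / (4 * ln 2).

Lemma key_ineq r : 0 <= r <= / 2 -> qpoly r <= - (r * (ln r * / ln 2)).
Proof.
move=> [hr0 hr1].
have [hL1 hL2] := L_bounds.
rewrite /qpoly -/L.
destruct (Rle_lt_or_eq_dec 0 r hr0) as [hpos|hz]; last first.
  rewrite -hz; right; field; lra.
have hF := @Ff_nonneg (4 * r - 1) ltac:(lra).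
rewrite /Ff in hF. replace (1 + (4 * r - 1)) with (4 * r) in hF by ring.
rewrite ln_mult in hF; try lra.
rewrite ln4 -/L in hF.
apply Rle_trans with (r * (2 * L - (4 * r - 1) + c * (4 * r - 1) ^ 2) * / L).
  right; rewrite /c -/L; field; lra.
replace (- (r * (ln r * / L))) with ((- (r * ln r)) * / L) by (field; lra).
apply Rmult_le_compat_r; [left; apply Rinv_0_lt_compat; lra|].
nra.
Qed.

End Ana.
From mathcomp Require Import ring.

Lemma rcN n : ((n%:R : R)%:C)%C = n%:R :> CC.
Proof. exact: rmorph_nat. Qed.

Lemma rcV (x : R) : ((x^-1)%:C)%C = ((x%:C)%C)^-1 :> CC.
Proof. exact: fmorphV. Qed.

Lemma ReD_sum (I : finType) (F : I -> CC) : complex.Re (\sum_i F i) = \sum_i complex.Re (F i).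
Proof. exact: raddf_sum. Qed.

Lemma ln2_pos : Rlt 0 (ln 2).
Proof. have := ln_lt_2; lra. Qed.

Lemma log2_inv_pow k : log2 ((2%:R ^+ k)^-1) = - k%:R.
Proof.
rewrite /log2 -RinvE -RpowE.
have -> : (2%:R : R) = IZR 2 by rewrite -INRE /=; lra.
rewrite ln_Rinv; last by apply: pow_lt; lra.
rewrite ln_pow; last by lra.
rewrite -INRE RoppE RmultE. have := ln2_pos => h. field. by apply/eqP => E; move: h; rewrite E; apply: Rlt_irrefl.
Qed.

Lemma eta_quarter : Defs.eta ((4%:R : R)^-1) = - (2%:R : R)^-1.
Proof.
have -> : (4%:R : R) = 2%:R ^+ 2 by rewrite expr2 -natrM.
rewrite /Defs.eta RmultE log2_inv_pow. by field.
Qed.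

Lemma oplin10 (T : finType) (rho : op T) x y : oplin 1 0 rho x y = rho x y.
Proof. by rewrite /oplin mul1r mul0r subr0. Qed.

Lemma Re_rc (x : R) : complex.Re ((x%:C)%C) = x.
Proof. by []. Qed.

Lemma ent_quarter (T : finType) (rho : op T) :
  (forall x y, rho y x = (rho x y)^*) ->
  (forall x y, opmul rho rho x y = (((4%:R : R)^-1)%:C)%C * rho x y) ->
  \sum_t rho t t = 1 -> vN_entropy rho = 2%:R.
Proof.
move=> hH hsq htr.
have hM : (@opmx T rho) ^t* = opmx rho := opmx_herm hH.
set k : CC := (((4%:R : R)^-1)%:C)%C.
have hN : (1 *: opmx rho - 0%:M) *m (1 *: opmx rho - 0%:M) = k *: (1 *: (@opmx T rho) - 0%:M).
  rewrite !opmx_lin opmx_mul opmx_scale; apply: opmx_ext => x y.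
  rewrite oplin10 -hsq /opmul; apply: eq_bigr => t _; by rewrite !oplin10.
have pt := pt2 hM hN.
have hs := sum1 hM 1 0.
rewrite opmx_lin opmx_tr in hs.
have {}hs : \sum_i spectral_diag (opmx rho) 0 i = 1.
  rewrite -htr -(eq_bigr _ (fun t _ => oplin10 rho t t)) -hs.
  by apply: eq_bigr => i _; rewrite /ev mul1r subr0.
rewrite /vN_entropy.
have E : forall i, Defs.eta (complex.Re (spectral_diag (opmx rho) 0 i)) =
                 - 2%:R * complex.Re (spectral_diag (opmx rho) 0 i).
  move=> i; have := pt i; rewrite /ev mul1r subr0 expr2 => /eqP.
  rewrite -subr_eq0 -mulrBl mulf_eq0 => /orP [|/eqP ->].
    rewrite subr_eq0 => /eqP ->; rewrite Re_rc eta_quarter; by field.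
  by rewrite /Defs.eta (_ : complex.Re 0 = 0) // RmultE mul0r mulr0.
rewrite RoppE (eq_bigr _ (fun i _ => E i)) -mulr_sumr -ReD_sum hs (_ : complex.Re 1 = 1) //.
by rewrite mulr1 opprK.
Qed.

Lemma eta_half : Defs.eta ((2%:R : R)^-1) = - (2%:R : R)^-1.
Proof.
have -> : (2%:R : R) = 2%:R ^+ 1 by rewrite expr1.
rewrite /Defs.eta RmultE log2_inv_pow expr1. by field.
Qed.

Lemma eta0 : Defs.eta 0 = 0.
Proof. by rewrite /Defs.eta RmultE mul0r. Qed.

Lemma eta_J (c d : R) : c = 0 \/ c = 2%:R \/ c = - 2%:R -> d = (c + 2%:R) / 8%:R ->
  - Defs.eta d = (2%:R)^-1 + c / 8%:R - c ^+ 2 / 16%:R.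
Proof.
move=> hc ->; move: hc.
case=> [h|[h|h]].
- have -> : (c + 2%:R) / 8%:R = (4%:R : R)^-1 by rewrite h; field.
  rewrite eta_quarter h. by field.
- have -> : (c + 2%:R) / 8%:R = (2%:R : R)^-1 by rewrite h; field.
  rewrite eta_half h. by field.
- have -> : (c + 2%:R) / 8%:R = 0 :> R by rewrite h; field.
  rewrite eta0 h. by field.
Qed.

Lemma ent_J (T : finType) (rho J : op T) :
  (forall x y, rho y x = (rho x y)^*) ->
  (forall x y, J x y = oplin 8%:R 2%:R rho x y) ->
  (forall x y, opmul (opmul J J) J x y = 4%:R * J x y) ->
  \sum_t J t t = 0 ->
  \sum_t opmul J J t t = 8%:R ->
  #|T| = 4%N ->
  vN_entropy rho = 3%:R / 2%:R.
Proof.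
move=> hH hJ hcube htr htr2 hcard.
have hM : (@opmx T rho) ^t* = opmx rho := opmx_herm hH.
have EJ : 8%:R *: (@opmx T rho) - 2%:R%:M = opmx J.
  by rewrite opmx_lin; apply: opmx_ext => x y; rewrite hJ.
have hN3 : (8%:R *: (@opmx T rho) - 2%:R%:M) *m (8%:R *: (@opmx T rho) - 2%:R%:M)
   *m (8%:R *: (@opmx T rho) - 2%:R%:M) = 4%:R *: (8%:R *: (@opmx T rho) - 2%:R%:M).
  rewrite EJ !opmx_mul opmx_scale; apply: opmx_ext => x y; exact: hcube.
have pt := pt3 hM hN3.
have s1 := sum1 hM 8%:R 2%:R.
rewrite EJ opmx_tr htr in s1.
have s2 := sum2 hM 8%:R 2%:R.
rewrite EJ opmx_mul opmx_tr htr2 in s2.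
set e := ev (opmx rho) 8%:R 2%:R in pt s1 s2.
have hc : forall i, e i = ((complex.Re (e i))%:C)%C /\
   (complex.Re (e i) = 0 \/ complex.Re (e i) = 2%:R \/ complex.Re (e i) = - 2%:R).
  move=> i.
  have : e i * (e i - 2%:R) * (e i + 2%:R) = 0.
    have := pt i => h.
    have -> : e i * (e i - 2%:R) * (e i + 2%:R) = e i ^+ 3 - 4%:R * e i by ring.
    by rewrite h subrr.
  move/eqP; rewrite !mulf_eq0 -!orbA => /or3P [] /eqP.
  - move=> ->; rewrite (_ : complex.Re 0 = 0) //; split; first by rewrite rmorph0.
    by left.
  - move/eqP; rewrite subr_eq0 => /eqP ->; rewrite -rcN Re_rc; split=> //.
    by right; left.
  - move/eqP; rewrite addr_eq0 => /eqP ->; rewrite -rcN -rmorphN Re_rc; split=> //.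
    by right; right.
set c := fun i => complex.Re (e i).
have hd : forall i, spectral_diag (opmx rho) 0 i = ((((c i) + 2%:R) / 8%:R)%:C)%C.
  move=> i.
  have -> : spectral_diag (opmx rho) 0 i = (e i + 2%:R) / 8%:R.
    rewrite /e /ev. by field.
  rewrite {1}(proj1 (hc i)) rmorphM rmorphD fmorphV !rmorph_nat.
  reflexivity.
have sc1 : \sum_i c i = 0.
  by rewrite /c -ReD_sum s1.
have sc2 : \sum_i c i ^+ 2 = 8%:R.
  rewrite -(Re_rc 8%:R) rcN -s2 ReD_sum; apply: eq_bigr => i _.
  by rewrite {1}(proj1 (hc i)) -rmorphXn Re_rc.
rewrite /vN_entropy RoppE -sumrN.
rewrite (eq_bigr (fun i => (2%:R)^-1 + c i / 8%:R - c i ^+ 2 / 16%:R)); last first.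
  by move=> i _; rewrite hd Re_rc (eta_J (proj2 (hc i)) (erefl _)).
rewrite sumrB big_split /= -!mulr_suml sc1 sc2 sumr_const card_ord hcard.
by field.
Qed.

Lemma rcB (x y : R) : (((x - y)%:C)%C : CC) = (x%:C)%C - (y%:C)%C.
Proof. exact: rmorphB. Qed.
Lemma rcD (x y : R) : (((x + y)%:C)%C : CC) = (x%:C)%C + (y%:C)%C.
Proof. exact: rmorphD. Qed.
Lemma rcM (x y : R) : (((x * y)%:C)%C : CC) = (x%:C)%C * (y%:C)%C.
Proof. exact: rmorphM. Qed.
Lemma rcX (x : R) k : (((x ^+ k)%:C)%C : CC) = (x%:C)%C ^+ k.
Proof. exact: rmorphXn. Qed.
Lemma rc_sum (I : finType) (F : I -> R) : (((\sum_i F i)%:C)%C : CC) = \sum_i ((F i)%:C)%C.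
Proof. exact: rmorph_sum. Qed.
Lemma rcI (x y : R) : (x%:C)%C = (y%:C)%C :> CC -> x = y.
Proof. exact: complexI. Qed.

Lemma real_of_ge0 (z : CC) : 0 <= z -> z = ((complex.Re z)%:C)%C /\ 0 <= complex.Re z.
Proof.
rewrite lecE => /andP [/eqP him hre]; split => //.
by rewrite [LHS]complexE him (_ : complex.Im 0 = 0) // rmorph0 mulr0 addr0.
Qed.


Lemma n2E : (2%:R : R) = IZR 2.
Proof. by rewrite -INRE /=; lra. Qed.
Lemma n4E : (4%:R : R) = IZR 4.
Proof. by rewrite -INRE /=; lra. Qed.
Lemma n16E : (16%:R : R) = IZR 16.
Proof. by rewrite -INRE /=; lra. Qed.

Definition A1 : R := (2%:R * ln 2 - 1) / ln 2.
Definition A3 : R := 16%:R * (1 - ln 2) / ln 2.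
Definition qp (r : R) := 2%:R^-1 + A1 * (r - 4%:R^-1) - 4%:R * (r - 4%:R^-1) ^+ 2
   + A3 * (r - 4%:R^-1) ^+ 3.

Lemma ln2_neq0 : ln 2 != 0.
Proof. apply/eqP => E; have := ln2_pos; rewrite E; apply: Rlt_irrefl. Qed.

Lemma qp_le r : 0 <= r -> r <= 2%:R^-1 -> qp r <= - Defs.eta r.
Proof.
move=> /RleP h0 /RleP h1.
have := @key_ineq r (conj h0 ltac:(rewrite n2E in h1; exact h1)).
move/RleP.
have -> : qpoly r = qp r.
  rewrite /qpoly /qp /A1 /A3 /=.
  rewrite ?RplusE ?RminusE ?RmultE ?RdivE ?RpowE ?RinvE ?RoppE ?R1E -?n2E -?n4E -?n16E.
  have := ln2_neq0 => hl.
  by field.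
by rewrite /Defs.eta /log2 RmultE RoppE.
Qed.

Lemma ent_lower (T : finType) (rho : op T) (Z : finType) (f g : T -> Z -> CC) :
  (forall x y, rho y x = (rho x y)^*) ->
  (forall x y, rho x y = \sum_z f x z * (f y z)^*) ->
  (forall x y, oplin (-1) (- (2%:R)^-1) rho x y = \sum_z g x z * (g y z)^*) ->
  \sum_t oplin 1 (4%:R^-1) rho t t = 0 ->
  \sum_t opmul (oplin 1 (4%:R^-1) rho) (oplin 1 (4%:R^-1) rho) t t = (8%:R)^-1 ->
  \sum_t opmul (opmul (oplin 1 (4%:R^-1) rho) (oplin 1 (4%:R^-1) rho))
                 (oplin 1 (4%:R^-1) rho) t t = 0 ->
  #|T| = 4%N ->
  3%:R / 2%:R <= vN_entropy rho.
Proof.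
move=> hH hf hg hs1 hs2 hs3 hcard.
have hM : (@opmx T rho) ^t* = opmx rho := opmx_herm hH.
set d := spectral_diag (opmx rho).
have hre : forall i, d 0 i = ((complex.Re (d 0 i))%:C)%C /\ 0 <= complex.Re (d 0 i).
  move=> i; apply: real_of_ge0.
  have := @pos _ _ hM 1 0 _ _ _ i; rewrite /ev mul1r subr0; apply.
  by rewrite opmx_lin (opmx_ext (oplin10 rho)) (opmx_adj hf).
set r := fun i => complex.Re (d 0 i).
have hr : forall i, d 0 i = ((r i)%:C)%C by move=> i; exact: (proj1 (hre i)).
have hup : forall i, r i <= 2%:R^-1.
  move=> i.
  have EA := etrans (opmx_lin (-1) (- (2%:R)^-1) rho) (opmx_adj hg).
  have := pos hM EA i.
  rewrite /ev -/d hr => h.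
  have : 0 <= (((2%:R^-1 - r i)%:C)%C : CC).
    by rewrite rcB rcV rcN; rewrite mulN1r opprK addrC in h.
  by rewrite ler0c subr_ge0.
have hev : forall i, ev (opmx rho) 1 (4%:R^-1) i = (((r i - 4%:R^-1)%:C)%C).
  by move=> i; rewrite /ev -/d hr mul1r rcB rcV rcN.
have m1 : \sum_i (r i - 4%:R^-1) = 0.
  apply: rcI; rewrite rc_sum [in RHS]rmorph0.
  have e1 : forall i, (((r i - 4%:R^-1))%:C)%C = ev (opmx rho) 1 (4%:R^-1) i by move=> i; rewrite hev.
  rewrite (eq_bigr _ (fun i _ => e1 i)) (sum1 hM) opmx_lin opmx_tr; exact: hs1.
have m2 : \sum_i (r i - 4%:R^-1) ^+ 2 = 8%:R^-1.
  apply: rcI; rewrite rc_sum [in RHS]rcV [in RHS]rcN.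
  have e2 : forall i, (((r i - 4%:R^-1) ^+ 2)%:C)%C = ev (opmx rho) 1 (4%:R^-1) i ^+ 2.
    by move=> i; rewrite rcX hev.
  rewrite (eq_bigr _ (fun i _ => e2 i)) (sum2 hM) opmx_lin opmx_mul opmx_tr; exact: hs2.
have m3 : \sum_i (r i - 4%:R^-1) ^+ 3 = 0.
  apply: rcI; rewrite rc_sum [in RHS]rmorph0.
  have e3 : forall i, (((r i - 4%:R^-1) ^+ 3)%:C)%C = ev (opmx rho) 1 (4%:R^-1) i ^+ 3.
    by move=> i; rewrite rcX hev.
  rewrite (eq_bigr _ (fun i _ => e3 i)) (sum3 hM) opmx_lin !opmx_mul opmx_tr; exact: hs3.
rewrite /vN_entropy RoppE -sumrN.
apply: (@le_trans _ _ (\sum_i qp (r i))); last first.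
  by apply: ler_sum => i _; apply: qp_le; [exact: (proj2 (hre i))|exact: hup].
rewrite /qp !big_split /= sumrN -!mulr_sumr m1 m2 m3 sumr_const card_ord hcard.
have := ln2_neq0 => hl.
rewrite /A1 /A3 le_eqVlt; apply/orP; left; apply/eqP.
by field.
Qed.

Local Notation T2 := (bool * bool)%type.

Definition om (th : T2 -> T2 -> R) (x y : T2) : CC := (cos (th x y) +i* sin (th x y))%C.
Definition nz (x y : T2) : bool := y.2 == (if y.1 then x.2 else x.1).

Lemma P_OT_nz x y : P_OT x y = if nz x y then 8%:R^-1 else 0.
Proof. by rewrite /P_OT /nz mul1r. Qed.

Lemma conj_cplx (a b : R) : ((a +i* b)%C : CC)^* = (a +i* (- b))%C.
Proof. by []. Qed.

Lemma om_norm th x y : om th x y * (om th x y)^* = 1.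
Proof.
rewrite /om conj_cplx; apply/eqP; rewrite eq_complex /=.
apply/andP; split; apply/eqP.
  have := sin2_cos2 (th x y); rewrite /Rsqr -!RmultE -!RminusE -!RoppE -R1E; lra.
rewrite -!RmultE -!RoppE -!RplusE -R0E; lra.
Qed.

Lemma conj_rc (r : R) : ((r%:C)%C : CC)^* = (r%:C)%C.
Proof. by rewrite conj_cplx oppr0. Qed.

Lemma conjM (u v : CC) : (u * v)^* = u^* * v^*.
Proof. exact: rmorphM. Qed.

Lemma psiE th x a : regular_embedding P_OT th (x, a) = om th x a * ((sqrt (P_OT x a))%:C)%C.
Proof. by []. Qed.

Lemma sqrt8 : sqrt ((8%:R : R)^-1) * sqrt ((8%:R : R)^-1) = (8%:R : R)^-1.
Proof.
rewrite -RmultE sqrt_sqrt //; apply/RleP; rewrite invr_ge0; exact: ler0n.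
Qed.

Lemma psi_prod th x a b :
  regular_embedding P_OT th (x, a) * (regular_embedding P_OT th (x, b))^* =
  if nz x a && nz x b then ((8%:R)^-1) * (om th x a * (om th x b)^*) else 0.
Proof.
rewrite !psiE conjM conj_rc mulrACA -rcM !P_OT_nz.
case: (nz x a); case: (nz x b) => /=.
- by rewrite sqrt8 rcV rcN mulrC.
- by rewrite sqrt_0 mulr0 rmorph0 mulr0.
- by rewrite sqrt_0 mul0r rmorph0 mulr0.
- by rewrite sqrt_0 mul0r rmorph0 mulr0.
Qed.

Lemma sumT2 (V : nmodType) (F : T2 -> V) :
  \sum_t F t = F (true, true) + F (true, false) + F (false, true) + F (false, false).
Proof.
rewrite (eq_bigr (fun p => F (p.1, p.2))); last by case.
by rewrite -(pair_bigA _ (fun i j => F (i, j))) /= !big_bool /= addrA.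
Qed.

Definition rhoB th : op T2 := ptraceA (measureA (proj (regular_embedding P_OT th))).

Lemma rhoB_E th a b : rhoB th a b =
  \sum_x (if nz x a && nz x b then ((8%:R)^-1) * (om th x a * (om th x b)^*) else 0).
Proof.
rewrite /rhoB /ptraceA; apply: eq_bigr => x _.
by rewrite /measureA /proj eqxx psi_prod.
Qed.

Lemma rhoB_diag th a : rhoB th a a = 4%:R^-1.
Proof.
by case: a => [[] []]; rewrite rhoB_E sumT2 /= !om_norm; field.
Qed.

Lemma rhoB_same th a b : a.1 = b.1 -> a != b -> rhoB th a b = 0.
Proof.
case: a => [[] []]; case: b => [[] []] //= _ _; rewrite rhoB_E sumT2 /=;
  by rewrite !addr0.
Qed.

Lemma rhoB_diff th a b : a.1 != b.1 -> rhoB th a b * rhoB th b a = 64%:R^-1.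
Proof.
have key : forall u v : CC, (8%:R)^-1 * (u * v^*) * ((8%:R)^-1 * (v * u^*)) =
   64%:R^-1 * (u * u^*) * (v * v^*) by move=> u v; field.
case: a => [[] []]; case: b => [[] []] //= _; rewrite !rhoB_E !sumT2 /= ?add0r ?addr0;
  by rewrite key !om_norm; field.
Qed.



Definition herm (T : finType) (r : op T) := forall x y, r y x = (r x y)^*.

Lemma herm_proj (T : finType) (psi : T -> CC) : herm (proj psi).
Proof. by move=> x y; rewrite /proj conjM conjCK mulrC. Qed.

Lemma herm_measA (X Y : finType) (r : op (X * Y)%type) : herm r -> herm (measureA r).
Proof. by move=> h x y; rewrite /measureA eq_sym; case: eqP => _; [exact: h|by rewrite rmorph0]. Qed.

Lemma herm_measB (X Y : finType) (r : op (X * Y)%type) : herm r -> herm (measureB r).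
Proof. by move=> h x y; rewrite /measureB eq_sym; case: eqP => _; [exact: h|by rewrite rmorph0]. Qed.

Lemma herm_ptA (X Y : finType) (r : op (X * Y)%type) : herm r -> herm (ptraceA r).
Proof. by move=> h x y; rewrite /ptraceA rmorph_sum; apply: eq_bigr => z _; exact: h. Qed.

Lemma herm_ptB (X Y : finType) (r : op (X * Y)%type) : herm r -> herm (ptraceB r).
Proof. by move=> h x y; rewrite /ptraceB rmorph_sum; apply: eq_bigr => z _; exact: h. Qed.

Lemma sumY th x : \sum_y regular_embedding P_OT th (x, y) * (regular_embedding P_OT th (x, y))^* = 4%:R^-1.
Proof.
rewrite (eq_bigr _ (fun y _ => psi_prod th x y y)).
by case: x => [[] []]; rewrite sumT2 /= !om_norm; field.
Qed.

Lemma sumX th y : \sum_x regular_embedding P_OT th (x, y) * (regular_embedding P_OT th (x, y))^* = 4%:R^-1.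
Proof.
rewrite (eq_bigr _ (fun x _ => psi_prod th x y y)).
by case: y => [[] []]; rewrite sumT2 /= !om_norm; field.
Qed.

Lemma pairsum (V : nmodType) (A B : finType) (F : (A * B)%type -> V) :
  \sum_c F c = \sum_a \sum_b F (a, b).
Proof.
rewrite (eq_bigr (fun p => F (p.1, p.2))); last by case.
by rewrite -(pair_bigA _ (fun i j => F (i, j))).
Qed.

Lemma quarter_T2 (r : op T2) : herm r ->
  (forall x x', r x x' = if x == x' then 4%:R^-1 else 0) -> vN_entropy r = 2%:R.
Proof.
move=> hh hr; apply: ent_quarter => //.
- move=> x y; rewrite rcV rcN /opmul (eq_bigr _ (fun z _ => congr2 (fun u v => u * v) (hr x z) (hr z y))) hr.
  by case: x => [[] []]; case: y => [[] []]; rewrite sumT2 /=; field.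
- by rewrite (eq_bigr _ (fun t _ => hr t t)) sumT2 /=; field.
Qed.

Lemma ent_ptB_measA th : vN_entropy (ptraceB (measureA (proj (regular_embedding P_OT th)))) = 2%:R.
Proof.
apply: quarter_T2; first exact: herm_ptB (herm_measA (herm_proj _)).
move=> x x'; rewrite /ptraceB /measureA /proj /=.
case: eqP => [->|_]; first exact: sumY.
by rewrite big1.
Qed.

Lemma ent_ptA_measB th : vN_entropy (ptraceA (measureB (proj (regular_embedding P_OT th)))) = 2%:R.
Proof.
apply: quarter_T2; first exact: herm_ptA (herm_measB (herm_proj _)).
move=> y y'; rewrite /ptraceA /measureB /proj /=.
case: eqP => [->|_]; first exact: sumX.
by rewrite big1.
Qed.

Lemma ent_measA th : vN_entropy (measureA (proj (regular_embedding P_OT th))) = 2%:R.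
Proof.
set psi := regular_embedding P_OT th.
apply: ent_quarter; first exact: herm_measA (herm_proj _).
- move=> a b; rewrite rcV rcN /opmul pairsum.
  have inner : forall c1, \sum_c2 measureA (proj psi) a (c1, c2) * measureA (proj psi) (c1, c2) b
      = if (a.1 == c1) && (c1 == b.1) then 4%:R^-1 * (psi a * (psi b)^*) else 0.
    move=> c1; rewrite /measureA /proj /=.
    case: (a.1 =P c1) => [<-|_] /=; last by rewrite big1 // => c2 _; rewrite mul0r.
    case: (a.1 =P b.1) => [_|_] /=; last by rewrite big1 // => c2 _; rewrite mulr0.
    rewrite (eq_bigr (fun c2 => psi a * (psi b)^* * (psi (a.1, c2) * (psi (a.1, c2))^*))); last first.
      by move=> c2 _; rewrite mulrACA [X in _ * X]mulrC mulrACA mulrC.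
    by rewrite -mulr_sumr sumY mulrC.
  rewrite (eq_bigr _ (fun c1 _ => inner c1)) /measureA /proj; clear inner.
  case: a => [a1 a2]; case: b => [b1 b2] /=.
  by case: a1 => [[] []]; case: b1 => [[] []]; rewrite sumT2 /= ?mulr0 ?addr0 ?add0r.
- rewrite pairsum (eq_bigr (fun a1 => (4%:R^-1 : CC))).
    by rewrite sumT2; field.
  move=> a1 _; rewrite -(sumY th a1); apply: eq_bigr => a2 _.
  by rewrite /measureA /proj eqxx.
Qed.

Lemma ent_measB th : vN_entropy (measureB (proj (regular_embedding P_OT th))) = 2%:R.
Proof.
set psi := regular_embedding P_OT th.
apply: ent_quarter; first exact: herm_measB (herm_proj _).
- move=> a b; rewrite rcV rcN /opmul pairsum exchange_big /=.
  have inner : forall c2, \sum_c1 measureB (proj psi) a (c1, c2) * measureB (proj psi) (c1, c2) b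
      = if (a.2 == c2) && (c2 == b.2) then 4%:R^-1 * (psi a * (psi b)^*) else 0.
    move=> c2; rewrite /measureB /proj /=.
    case: (a.2 =P c2) => [<-|_] /=; last by rewrite big1 // => c1 _; rewrite mul0r.
    case: (a.2 =P b.2) => [_|_] /=; last by rewrite big1 // => c1 _; rewrite mulr0.
    rewrite (eq_bigr (fun c1 => psi a * (psi b)^* * (psi (c1, a.2) * (psi (c1, a.2))^*))); last first.
      by move=> c1 _; rewrite mulrACA [X in _ * X]mulrC mulrACA mulrC.
    by rewrite -mulr_sumr sumX mulrC.
  rewrite (eq_bigr _ (fun c2 _ => inner c2)) /measureB /proj; clear inner.
  case: a => [a1 a2]; case: b => [b1 b2] /=.
  by case: a2 => [[] []]; case: b2 => [[] []]; rewrite sumT2 /= ?mulr0 ?addr0 ?add0r.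
- rewrite pairsum exchange_big /= (eq_bigr (fun a2 => (4%:R^-1 : CC))).
    by rewrite sumT2; field.
  move=> a2 _; rewrite -(sumX th a2); apply: eq_bigr => a1 _.
  by rewrite /measureB /proj eqxx.
Qed.


Definition Kop th : op T2 := oplin 1 (4%:R^-1) (rhoB th).

Lemma K_same th t s : t.1 = s.1 -> Kop th t s = 0.
Proof.
move=> h; rewrite /Kop /oplin mul1r; case: eqP => [->|ne].
  by rewrite rhoB_diag (_ : true%:R = 1 :> CC) // mulr1 subrr.
by rewrite (@rhoB_same th _ _ h (introN eqP ne)) (_ : false%:R = 0 :> CC) // mulr0 subrr.
Qed.

Lemma K_diff th t s : t.1 != s.1 -> Kop th t s = rhoB th t s.
Proof.
move=> h; rewrite /Kop /oplin mul1r; case: eqP => [e|ne].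
  by rewrite e eqxx in h.
by rewrite (_ : false%:R = 0 :> CC) // mulr0 subr0.
Qed.

Lemma KK th t s : Kop th t s * Kop th s t = if t.1 == s.1 then 0 else 64%:R^-1.
Proof.
case: eqP => h; first by rewrite K_same // mul0r.
have h' : t.1 != s.1 by apply/eqP.
by rewrite K_diff // K_diff 1?eq_sym // rhoB_diff.
Qed.

Lemma KKK th t s u : Kop th t s * Kop th s u * Kop th u t = 0.
Proof.
case: (eqVneq t.1 s.1) => [h|h1]; first by rewrite K_same // !mul0r.
case: (eqVneq s.1 u.1) => [h|h2]; first by rewrite (K_same _ h) mulr0 mul0r.
have h : u.1 = t.1.
  by move: h1 h2; case: (t.1); case: (s.1); case: (u.1).
by rewrite (K_same _ h) mulr0.
Qed.

Definition sg (a : T2) : CC := if a.1 then -1 else 1.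

Lemma conj_sg a : (sg a)^* = sg a.
Proof. by rewrite /sg; case: (a.1); rewrite ?rmorphN1 ?rmorph1. Qed.

Lemma rhoB_raw th x y : rhoB th x y =
  \sum_z regular_embedding P_OT th (z, x) * (regular_embedding P_OT th (z, y))^*.
Proof. by rewrite /rhoB /ptraceA; apply: eq_bigr => z _; rewrite /measureA /proj eqxx. Qed.

Lemma ent_rhoB_lower th : 3%:R / 2%:R <= vN_entropy (rhoB th).
Proof.
set psi := regular_embedding P_OT th.
apply: (@ent_lower _ _ _ (fun a z => psi (z, a)) (fun a z => sg a * psi (z, a))).
- exact: herm_ptA (herm_measA (herm_proj _)).
- exact: rhoB_raw.
- move=> x y.
  rewrite (eq_bigr (fun z => sg x * sg y * (psi (z, x) * (psi (z, y))^*))); last first.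
    by move=> z _; rewrite conjM conj_sg mulrACA.
  rewrite -mulr_sumr -rhoB_raw /oplin.
  case: eqP => [<-|nxy].
    rewrite rhoB_diag (_ : true%:R = 1 :> CC) //.
    by case: x => [[] b2]; rewrite /sg /=; field.
  rewrite (_ : false%:R = 0 :> CC) // mulr0 subr0.
  case: (eqVneq x.1 y.1) => [h|h]; first by rewrite (@rhoB_same th _ _ h (introN eqP nxy)) !mulr0.
  move: h; case: x nxy => [[] ?]; case: y => [[] ?] //= _ _; rewrite /sg /=; ring.
- by rewrite big1 // => t _; rewrite -/(Kop th t t) K_same.
- rewrite (eq_bigr (fun t : T2 => \sum_(s : T2) (if t.1 == s.1 then (0 : CC) else 64%:R^-1))); last first.
    by move=> t _; rewrite /opmul; apply: eq_bigr => s _; rewrite -/(Kop th) KK.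
  by rewrite sumT2 /= !sumT2 /=; field.
- rewrite big1 // => t _; rewrite /opmul big1 // => u _; rewrite mulr_suml big1 // => s _.
  by rewrite -/(Kop th) KKK.
- by rewrite card_prod card_bool.
Qed.


Definition th0 : T2 -> T2 -> R := fun _ _ => 0.

Lemma om0 x y : om th0 x y = 1.
Proof. by rewrite /om /th0 cos_0 sin_0 R1E R0E. Qed.

Definition JB : op T2 := fun a b => if a.1 != b.1 then 1 else 0.

Lemma JB_E x y : JB x y = oplin 8%:R 2%:R (rhoB th0) x y.
Proof.
rewrite /oplin rhoB_E sumT2 !om0 rmorph1 mulr1.
by case: x => [[] []]; case: y => [[] []]; rewrite /JB /=; field.
Qed.

Lemma JB_cube x y : opmul (opmul JB JB) JB x y = 4%:R * JB x y.
Proof.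
rewrite /opmul !sumT2.
by case: x => [[] []]; case: y => [[] []]; rewrite /JB /=; field.
Qed.

Lemma JB_tr : \sum_t JB t t = 0.
Proof. by rewrite sumT2 /JB /=; field. Qed.

Lemma JB_tr2 : \sum_t opmul JB JB t t = 8%:R.
Proof. by rewrite /opmul !sumT2 /JB /=; field. Qed.

Lemma ent_rhoB0 : vN_entropy (rhoB th0) = 3%:R / 2%:R.
Proof.
apply: (@ent_J _ _ JB).
- exact: herm_ptA (herm_measA (herm_proj _)).
- exact: JB_E.
- exact: JB_cube.
- exact: JB_tr.
- exact: JB_tr2.
- by rewrite card_prod card_bool.
Qed.

Lemma psi_prodG th x a x' b :
  regular_embedding P_OT th (x, a) * (regular_embedding P_OT th (x', b))^* =
  if nz x a && nz x' b then ((8%:R)^-1) * (om th x a * (om th x' b)^*) else 0.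
Proof.
rewrite !psiE conjM conj_rc mulrACA -rcM !P_OT_nz.
case: (nz x a); case: (nz x' b) => /=.
- by rewrite sqrt8 rcV rcN mulrC.
- by rewrite sqrt_0 mulr0 rmorph0 mulr0.
- by rewrite sqrt_0 mul0r rmorph0 mulr0.
- by rewrite sqrt_0 mul0r rmorph0 mulr0.
Qed.

Definition rhoA th : op T2 := ptraceB (measureB (proj (regular_embedding P_OT th))).

Lemma rhoA_E th x x' : rhoA th x x' =
  \sum_y (if nz x y && nz x' y then ((8%:R)^-1) * (om th x y * (om th x' y)^*) else 0).
Proof.
rewrite /rhoA /ptraceB; apply: eq_bigr => y _.
by rewrite /measureB /proj eqxx psi_prodG.
Qed.

Definition JA : op T2 := fun a b => if (a.1 == b.1) != (a.2 == b.2) then 1 else 0.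

Lemma JA_E x y : JA x y = oplin 8%:R 2%:R (rhoA th0) x y.
Proof.
rewrite /oplin rhoA_E sumT2 !om0 rmorph1 mulr1.
by case: x => [[] []]; case: y => [[] []]; rewrite /JA /=; field.
Qed.

Lemma JA_cube x y : opmul (opmul JA JA) JA x y = 4%:R * JA x y.
Proof.
rewrite /opmul !sumT2.
by case: x => [[] []]; case: y => [[] []]; rewrite /JA /=; field.
Qed.

Lemma JA_tr : \sum_t JA t t = 0.
Proof. by rewrite sumT2 /JA /=; field. Qed.

Lemma JA_tr2 : \sum_t opmul JA JA t t = 8%:R.
Proof. by rewrite /opmul !sumT2 /JA /=; field. Qed.

Lemma ent_rhoA0 : vN_entropy (rhoA th0) = 3%:R / 2%:R.
Proof.
apply: (@ent_J _ _ JA).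
- exact: herm_ptB (herm_measB (herm_proj _)).
- exact: JA_E.
- exact: JA_cube.
- exact: JA_tr.
- exact: JA_tr2.
- by rewrite card_prod card_bool.
Qed.


Lemma eta_eighth : Defs.eta ((8%:R : R)^-1) = - (3%:R / 8%:R).
Proof.
have -> : (8%:R : R) = 2%:R ^+ 3 by rewrite !exprS expr0 mulr1 -!natrM.
rewrite /Defs.eta RmultE log2_inv_pow. by field.
Qed.

Lemma eta_P x y : Defs.eta (P_OT x y) = if nz x y then - (3%:R / 8%:R) else 0.
Proof. by rewrite P_OT_nz; case: (nz x y); [exact: eta_eighth|exact: eta0]. Qed.

Lemma marg1_P x : marg1 P_OT x = 4%:R^-1.
Proof.
rewrite /marg1 (@sumT2 R) !P_OT_nz.
by case: x => [[] []]; rewrite /nz /=; field.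
Qed.

Lemma marg2_P y : marg2 P_OT y = 4%:R^-1.
Proof.
rewrite /marg2 (@sumT2 R) !P_OT_nz.
by case: y => [[] []]; rewrite /nz /=; field.
Qed.

Lemma mi_P : mutual_info P_OT = 1.
Proof.
rewrite /mutual_info /shannon !(@sumT2 R) (@pairsum R) !(@sumT2 R) !marg1_P !marg2_P !eta_P eta_quarter /nz /=.
rewrite ?RminusE ?RplusE ?RoppE.
by field.
Qed.

From mathcomp Require Import lra.

Lemma qmiA th : qmutual_info (measureA (proj (regular_embedding P_OT th))) = vN_entropy (rhoB th).
Proof.
rewrite /qmutual_info ent_ptB_measA ent_measA -/(rhoB th).
rewrite ?RminusE ?RplusE. lra.
Qed.

Lemma qmiB th : qmutual_info (measureB (proj (regular_embedding P_OT th))) = vN_entropy (rhoA th).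
Proof.
rewrite /qmutual_info ent_ptA_measB ent_measB -/(rhoA th).
rewrite ?RminusE ?RplusE. lra.
Qed.

Lemma part1 th : 1 / 2 <= leakage P_OT (regular_embedding P_OT th).
Proof.
rewrite /leakage le_max; apply/orP; left.
rewrite qmiA mi_P ?RminusE.
have := ent_rhoB_lower th. lra.
Qed.

Lemma leak0 : leakage P_OT (regular_embedding P_OT (fun _ _ => 0)) = 1 / 2.
Proof.
rewrite /leakage.
have -> : qmutual_info (measureA (proj (regular_embedding P_OT (fun _ _ => 0)))) = 3%:R / 2%:R.
  by rewrite qmiA; exact: ent_rhoB0.
have -> : qmutual_info (measureB (proj (regular_embedding P_OT (fun _ _ => 0)))) = 3%:R / 2%:R.
  by rewrite qmiB; exact: ent_rhoA0.
rewrite maxxx mi_P ?RminusE. lra.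
Qed.

Theorem theorem7 :
  (forall theta : bool * bool -> bool * bool -> R,
      1 / 2 <= leakage P_OT (regular_embedding P_OT theta)) /\
  (forall theta : bool * bool -> bool * bool -> R,
      leakage P_OT (regular_embedding P_OT (fun _ _ => 0))
        <= leakage P_OT (regular_embedding P_OT theta)).
Proof.
split; first exact: part1.
by move=> th; rewrite leak0; exact: part1.
Qed.
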